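(* Let $G$ be a finite group which is a $2$-closed group. Then the center $Z(G)$ of $G$ is cyclic.
   Context: Permutations act on the right; $\alpha^g$ denotes the image of $\alpha$ under $g$. For a set $\Omega$ and $G\leq{\rm Sym}(\Omega)$, the $2$-closure of $G$ on $\Omega$ is $G^{(2),\Omega}=\{\theta\in{\rm Sym}(\Omega)\mid \forall \alpha,\beta\in\Omega\ \exists g\in G:\ \alpha^\theta=\alpha^g,\ \beta^\theta=\beta^g\}$. $G$ is called $2$-closed on $\Omega$ if $G=G^{(2),\Omega}$. An abstract group $G$ is called a $2$-closed group if $H=H^{(2),\Omega}$ for every set $\Omega$ and every subgroup $H\leq{\rm Sym}(\Omega)$ with $H\cong G$ (i.e. $G$ is $2$-closed in all of its faithful permutation representations). *)

(* Defs.v *)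
From mathcomp Require Import all_boot all_fingroup all_solvable.
Set Implicit Arguments. Unset Strict Implicit. Unset Printing Implicit Defensive.
Local Open Scope group_scope.

(* A faithful permutation representation of G on an arbitrary set (type) T:
   an injective homomorphism g |-> act g from G into Sym(T), written as a
   right action (alpha^(gh) = (alpha^g)^h).  Its image H is exactly an
   arbitrary subgroup of Sym(T) isomorphic to G. *)
Definition faithful_perm_rep (gT : finGroupType) (G : {group gT})
    (T : Type) (act : gT -> T -> T) : Prop :=
  [/\ forall x, act 1 x = x,
      (forall g h x, g \in G -> h \in G -> act (g * h) x = act h (act g x))
    & {in G &, injective act}].

(* H = act(G) is 2-closed on T: every permutation theta of T which, on every
   pair of points, agrees with some element of H, lies in H.
   (The inclusion H <= H^(2) always holds.) *)
Definition two_closed_on (gT : finGroupType) (G : {group gT})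
    (T : Type) (act : gT -> T -> T) : Prop :=
  forall theta : T -> T, bijective theta ->
    (forall a b : T, exists2 g, g \in G & theta a = act g a /\ theta b = act g b) ->
    exists2 g, g \in G & theta = act g.

Definition two_closed_group (gT : finGroupType) (G : {group gT}) : Prop :=
  forall (T : Type) (act : gT -> T -> T),
    faithful_perm_rep G act -> two_closed_on G act.

(* Main.v *)
Require Import Defs.
From mathcomp Require Import all_boot all_fingroup all_solvable.
Set Implicit Arguments. Unset Strict Implicit. Unset Printing Implicit Defensive.
Local Open Scope group_scope.

Lemma key (gT : finGroupType) (G A B C : {group gT}) (a b : gT) :
  A \subset 'Z(G) -> B \subset 'Z(G) -> C \subset 'Z(G) ->
  a \in A -> b \in B -> a * b \in C -> A :&: B = 1 -> B :&: C = 1 ->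
  b \notin A -> ~ two_closed_group G.
Proof.
move=> AZ BZ CZ aA bB abC TAB TBC bA tc.
have nZ (H : {group gT}) : H \subset 'Z(G) -> G \subset 'N(H).
  move=> HZ; apply: cents_norm; rewrite centsC.
  by apply: subset_trans HZ _; apply: subsetIr.
have inZ (H : {group gT}) x : H \subset 'Z(G) -> x \in H -> x \in G.
  by move=> HZ xH; have := subsetP HZ x xH; case/setIP.
have nA := nZ A AZ; have nB := nZ B BZ; have nC := nZ C CZ.
pose T := ((coset_of A + coset_of B) + coset_of C)%type.
pose act (g : gT) (t : T) : T := match t with
  | inl (inl X) => inl (inl (X * coset A g))
  | inl (inr X) => inl (inr (X * coset B g))
  | inr X => inr (X * coset C g) end.
pose getA (t : T) : coset_of A := if t is inl (inl X) then X else 1.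
pose getB (t : T) : coset_of B := if t is inl (inr X) then X else 1.
pose getC (t : T) : coset_of C := if t is inr X then X else 1.
have Hf : faithful_perm_rep G act.
  split.
  - by case=> [[X|X]|X]; rewrite /act morph1 mulg1.
  - move=> g h [[X|X]|X] gG hG; rewrite /act morphM ?mulgA //;
      by [apply: (subsetP nA) | apply: (subsetP nB) | apply: (subsetP nC)].
  - move=> g h gG hG E.
    have EA : 1 * coset A g = 1 * coset A h :=
      congr1 getA (congr1 (fun f => f (inl (inl 1))) E).
    have EB : 1 * coset B g = 1 * coset B h :=
      congr1 getB (congr1 (fun f => f (inl (inr 1))) E).
    rewrite !mul1g in EA EB.
    apply: (mulIg h^-1); rewrite mulgV; 
    suff : g * h^-1 \in A :&: B by rewrite TAB => /set1P.
    have gA := subsetP nA g gG; have hA := subsetP nA h hG.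
    have gB := subsetP nB g gG; have hB := subsetP nB h hG.
    apply/setIP; split; apply: coset_idr; rewrite ?groupM ?groupV //.
      rewrite morphM ?morphV ?groupV //.
      by change (coset A g * (coset A h)^-1 = 1); rewrite EA mulgV.
    rewrite morphM ?morphV ?groupV //.
    by change (coset B g * (coset B h)^-1 = 1); rewrite EB mulgV.
pose theta (t : T) : T := match t with
  | inl (inl X) => inl (inl (X * coset A b)) | _ => t end.
have aG : a \in G := inZ _ _ AZ aA.
have bG : b \in G := inZ _ _ BZ bB.
have hAb : coset A (a * b) = coset A b.
  rewrite morphM ?(subsetP nA) //.
  by change (coset A a * coset A b = coset A b); rewrite coset_id ?mul1g.
have hBb : coset B b = 1 by rewrite coset_id.
have hCab : coset C (a * b) = 1 by rewrite coset_id.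
have bij : bijective theta.
  exists (fun t : T => match t with
    | inl (inl X) => inl (inl (X * (coset A b)^-1)) | _ => t end).
    by case=> [[X|X]|X] //=; rewrite mulgK.
  by case=> [[X|X]|X] //=; rewrite mulgKV.
have := tc T act Hf theta bij.
case.
  case=> [[X|X]|X] [[Y|Y]|Y].
  all: try by exists b; rewrite //= ?hBb ?mulg1.
  all: try by exists (a * b); rewrite ?groupM //= ?hAb ?hCab ?mulg1.
  all: try by exists 1; rewrite //= !morph1 !mulg1.
move=> g gG E.
have EA : 1 * coset A b = 1 * coset A g :=
  congr1 getA (congr1 (fun f => f (inl (inl 1))) E).
have EB : 1 = 1 * coset B g :=
  congr1 getB (congr1 (fun f => f (inl (inr 1))) E).
have EC : 1 = 1 * coset C g :=
  congr1 getC (congr1 (fun f => f (inr 1)) E).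
rewrite !mul1g in EA EB EC.
have gB : g \in B by apply: coset_idr; [apply: (subsetP nB) | by []].
have gC : g \in C by apply: coset_idr; [apply: (subsetP nC) | by []].
have : g \in B :&: C by apply/setIP.
rewrite TBC => /set1P g1; subst g.
move: EA; rewrite morph1 => /(coset_idr (subsetP nA b bG)).
by rewrite (negPf bA).
Qed.

Theorem theorem1 (gT : finGroupType) (G : {group gT}) :
  two_closed_group G -> cyclic 'Z(G).
Proof.
move=> tc; case: (boolP (cyclic 'Z(G))) => // ncyc; exfalso.
move: ncyc; rewrite abelian_rank1_cyclic ?center_abelian // -ltnNge => r2.
have [p pr rp] := rank_witness 'Z(G).
rewrite rp in r2.
have [E EE] : exists E : {group gT}, E \in 'E_p^2('Z(G)) by apply/p_rank_geP.
have cE := card_pnElem EE.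
case/pnElemP: EE => EZ abE _.
have E1 : E :!=: 1.
  apply/eqP => E1; move: cE; rewrite E1 cards1 => /esym/eqP.
  by rewrite -(expn0 p) eqn_exp2l ?prime_gt1.
have [a aE a1] := trivgPn _ E1.
have oa := abelem_order_p abE aE a1.
have : ~~ (E \subset <[a]>).
  apply/negP => /subset_leq_card; rewrite cE -orderE oa.
  by rewrite leqNgt -{1}(expn1 p) ltn_exp2l ?prime_gt1.
case/subsetPn => b bE baN.
have b1 : b != 1 by apply: contra baN => /eqP ->; rewrite group1.
have ob := abelem_order_p abE bE b1.
have sub x : x \in E -> <[x]> \subset 'Z(G).
  by move=> xE; rewrite cycle_subG (subsetP EZ).
have abE' : a * b \in E by rewrite groupM.
have TAB : <[a]> :&: <[b]> = 1.
  by rewrite setIC prime_TIg // -?orderE ?ob // cycle_subG.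
have aNb : a \notin <[b]>.
  apply/negP => ab; move: baN; rewrite -cycle_subG.
  have : <[a]> \subset <[b]> by rewrite cycle_subG.
  move=> sab; suff -> : <[b]> = <[a]> by rewrite subxx.
  by apply/esym/eqP; rewrite eqEcard sab /= -[#|<[b]>|]/#[b] -[#|<[a]>|]/#[a] oa ob.
have TBC : <[b]> :&: <[a * b]> = 1.
  have [ab1|ab1] := eqVneq (a * b) 1.
    by rewrite ab1 cycle1 setIg1.
  have oab := abelem_order_p abE abE' ab1.
  rewrite setIC prime_TIg // -?orderE ?oab // cycle_subG.
  by apply: contra aNb; rewrite groupMr // cycle_id.
apply: (key (sub a aE) (sub b bE) (sub _ abE') (cycle_id a) (cycle_id b)
  (cycle_id _) TAB TBC baN tc).
Qed.
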